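(* Let $(F_{\mathfrak A},\phi_{\mathfrak A,\mathfrak B})$ be an $S_n$-equivariant strict system of sheaves on $X^n$. Then $d_{n,k-1}\circ d_{n,k}=0$ for all $k$.
   Context: $X$ is a complex quasi-projective scheme with a torus $\mathbb T$-action; ''sheaf'' means $\mathbb T$-equivariant, cohomologically $\mathbb Z/2$-graded coherent sheaf. $[n]=\{1,\dots,n\}$; subsets of $[n]$ carry the binary total order ($A\le B$ iff $\sum_{i\in A}2^i\le\sum_{i\in B}2^i$). Strict system: set partitions of $[n]$ are ordered by refinement; for a set partition $\mathfrak D$, $(X^n)_{\mathfrak D}=\{(x_i):x_i=x_j\iff i,j\text{ in the same block of }\mathfrak D\}$; $\mathfrak A\cap\mathfrak B$ is the partition into nonempty intersections of blocks; $U_{\mathfrak A,\mathfrak B}=\bigcup\{(X^n)_{\mathfrak D}:\mathfrak A\cap\mathfrak D=\mathfrak B\cap\mathfrak D\}$. The system consists of sheaves $F_{\mathfrak A}$ on $X^n$ and homomorphisms $\phi_{\mathfrak A,\mathfrak B}:F_{\mathfrak A}\to F_{\mathfrak B}$ for $\mathfrak A\le\mathfrak B$ with $\phi_{\mathfrak B,\mathfrak C}\phi_{\mathfrak A,\mathfrak B}=\phi_{\mathfrak A,\mathfrak C}$, $\phi_{\mathfrak A,\mathfrak A}=\mathrm{id}$, $\phi_{\mathfrak A,\mathfrak B}|_{U_{\mathfrak A,\mathfrak B}}$ an isomorphism, together with compatible $S_n$-equivariance isomorphisms $(\sigma_X^{-1})^*F_{\mathfrak A}\cong F_{\sigma^{-1}\mathfrak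 A}$. Index trees: an index tree of order $n$ is a rooted tree whose nodes are leaves or have at least two children, with subsets $L_v\subseteq[n]$ at the leaves forming a set partition of $[n]$; for non-leaf $v$, $L_v$ is the union of the labels of leaves below $v$; trees are identified with $L(T)=\{L_v\}$. $\mathfrak A(T)$ is the set of leaf labels, $P(T)$ the set of non-leaf labels, $F_T=F_{\mathfrak A(T)}$, $\mathcal T_{n,k}$ the set of index trees with $k$ non-leaf nodes, and $G_{n,k}=\bigoplus_{T\in\mathcal T_{n,k}}F_T$. Contractions: for a non-leaf, non-root node $v$, $O(T,v)$ deletes $v$ and attaches its children to its parent (labels unchanged). A node is exceptional if it is not a leaf and all its children are leaves; for exceptional $v$, $E(T,v)$ deletes all children of $v$. For a non-leaf node $v$, $s(v)=(-1)^l$ with $l$ the number of $L\in P(T)$ with $L<L_v$. Define $o(T,v)=s(v)\,\mathrm{id}:F_T\to F_{O(T,v)}$ (note $\mathfrak A(O(T,v))=\mathfrak A(T)$) and $e(T,v)=-s(v)\phi_{\mathfrak A(T),\mathfrak A(E(T,v))}:F_T\to F_{E(T,v)}$. The map $d_{n,k}:G_{n,k}\to G_{n,k-1}$ is the sum of all $o(T,v)$ (over $T\in\mathcal T_{n,k}$, $v$ non-leaf non-root) and all $e(T,v)$ (over $T\in\mathcal T_{n,k}$, $v$ exceptional). *)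

(* Defs.v *)
From HB Require Import structures.
From mathcomp Require Import all_boot all_order all_algebra.
Set Implicit Arguments. Unset Strict Implicit. Unset Printing Implicit Defensive.
Import GRing.Theory Num.Theory.
Local Open Scope ring_scope.

(* An abstract preadditive category (Ab-enriched category).  The category  *)
(* of T-equivariant Z/2-graded coherent sheaves on X^n is an instance; no  *)
Record preadditive := Preadditive {
  obj :> Type;
  mor : obj -> obj -> zmodType;
  mcomp : forall a b c : obj, mor b c -> mor a b -> mor a c;
  idm : forall a : obj, mor a a;
  comp_addl : forall a b c (g1 g2 : mor b c) (f : mor a b),
      mcomp (g1 + g2) f = mcomp g1 f + mcomp g2 f;
  comp_addr : forall a b c (g : mor b c) (f1 f2 : mor a b),
      mcomp g (f1 + f2) = mcomp g f1 + mcomp g f2;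
  comp_assoc : forall a b c d (h : mor c d) (g : mor b c) (f : mor a b),
      mcomp h (mcomp g f) = mcomp (mcomp h g) f;
  comp_idl : forall a b (f : mor a b), mcomp (idm b) f = f;
  comp_idr : forall a b (f : mor a b), mcomp f (idm a) = f
}.

(* [n] = {1..n} is modelled by 'I_n = {0..n-1} (shift by one). *)

(* (Shifting indices by one multiplies codes by 2: same order.)          *)
Definition bcode n (A : {set 'I_n}) : nat := (\sum_(i in A) 2 ^ i)%N.
Definition blt n (A B : {set 'I_n}) : bool := (bcode A < bcode B)%N.

Definition set_partition n (P : {set {set 'I_n}}) : bool := partition P setT.

Definition refines n (A B : {set {set 'I_n}}) : bool :=
  [forall a in A, exists b in B, a \subset b].

(* Index trees, identified with their label sets L(T). *)
Definition minimal_in n (L : {set {set 'I_n}}) (A : {set 'I_n}) : bool :=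
  [forall B in L, (B \subset A) ==> (B == A)].

Definition is_index_tree n (L : {set {set 'I_n}}) : bool :=
  [&& set0 \notin L, setT \in L,
      [forall A in L, forall B in L,
         [|| A \subset B, B \subset A | [disjoint A & B]]] &
      [forall A in L,
         A == \bigcup_(B in L | minimal_in L B && (B \subset A)) B]].

Definition leaves n (L : {set {set 'I_n}}) : {set {set 'I_n}} :=
  [set A in L | minimal_in L A].
Definition nonleaves n (L : {set {set 'I_n}}) : {set {set 'I_n}} :=
  L :\: leaves L.

Definition children n (L : {set {set 'I_n}}) (v : {set 'I_n}) : {set {set 'I_n}} :=
  [set B in L | (B \proper v) &&
     [forall C in L, (B \proper C) ==> ~~ (C \proper v)]].

Definition exceptional n (L : {set {set 'I_n}}) (v : {set 'I_n}) : bool :=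
  (v \in nonleaves L) && (children L v \subset leaves L).

Definition trees n (k : nat) : {set {set {set 'I_n}}} :=
  [set L | is_index_tree L && (#|nonleaves L| == k)].

Definition Ocontr n (L : {set {set 'I_n}}) (v : {set 'I_n}) := L :\ v.
Definition Econtr n (L : {set {set 'I_n}}) (v : {set 'I_n}) := L :\: children L v.

Definition sgn n (L : {set {set 'I_n}}) (v : {set 'I_n}) : int :=
  (-1) ^+ #|[set B in nonleaves L | blt B v]|.

(* The component F_T -> F_T' of d_{n,k}: sum of all o(T,v) with O(T,v)=T'
   and all e(T,v) with E(T,v)=T'.  Since A(O(T,v)) = A(T) and
   phi_{A,A} = id, o(T,v) = s(v) id is written s(v) phi_{A(T),A(T')}. *)
Definition dcomp (C : preadditive) n (F : {set {set 'I_n}} -> C)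
    (phi : forall A B, mor (F A) (F B))
    (T T' : {set {set 'I_n}}) : mor (F (leaves T)) (F (leaves T')) :=
  (\sum_(v in nonleaves T | (v != setT) && (T' == Ocontr T v))
      phi (leaves T) (leaves T') *~ sgn T v)
  + (\sum_(v in nonleaves T | exceptional T v && (T' == Econtr T v))
      phi (leaves T) (leaves T') *~ (- sgn T v)).

(* Strict system (functoriality part). *)
Definition strict_system (C : preadditive) n (F : {set {set 'I_n}} -> C)
    (phi : forall A B, mor (F A) (F B)) : Prop :=
  (forall A, set_partition A -> phi A A = idm (F A)) /\
  (forall A B D, set_partition A -> set_partition B -> set_partition D ->
     refines A B -> refines B D ->
     mcomp (phi B D) (phi A B) = phi A D).

(* Main.v *)
Require Import Defs.
From mathcomp Require Import all_boot all_order all_algebra.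
From mathcomp Require Import ring.
Import GRing.Theory.
Set Implicit Arguments. Unset Strict Implicit. Unset Printing Implicit Defensive.

Section Trees.
Variable n : nat.
Implicit Types (L T : {set {set 'I_n}}) (A B C v : {set 'I_n}).

Lemma minimalP L A :
  reflect (forall B, B \in L -> B \subset A -> B = A) (minimal_in L A).
Proof.
apply: (iffP forall_inP) => H B BL.
  by move=> sBA; apply/eqP; exact: (implyP (H B BL)).
by apply/implyP => sBA; apply/eqP; exact: H.
Qed.

Lemma leavesE L A : (A \in leaves L) = (A \in L) && minimal_in L A.
Proof. by rewrite inE. Qed.

Lemma nonleavesE L A : (A \in nonleaves L) = (A \in L) && ~~ minimal_in L A.
Proof. by rewrite !inE; case: (A \in L); rewrite ?andbT ?andbF. Qed.

Lemma notminP L A : ~~ minimal_in L A -> exists2 B, B \in L & B \proper A.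
Proof.
move/forall_inPn => [B BL]; rewrite negb_imply => /andP [sBA neq].
by exists B => //; rewrite properEneq neq sBA.
Qed.

Definition laminar L := forall A B, A \in L -> B \in L ->
  [|| A \subset B, B \subset A | [disjoint A & B]].
Definition covering L := forall A x, A \in L -> x \in A ->
  exists2 B, B \in leaves L & (x \in B) && (B \subset A).

Lemma itP L : reflect [/\ set0 \notin L, setT \in L, laminar L & covering L]
  (is_index_tree L).
Proof.
apply: (iffP and4P) => [[s0 sT /forall_inP lam /forall_inP cov]|[s0 sT lam cov]].
  split => //.
    by move=> A B AL BL; exact: (forall_inP (lam A AL)) B BL.
  move=> A x AL xA; have /eqP E := cov A AL; rewrite E in xA.
  case/bigcupP: xA => B /andP[BL /andP[mB sBA]] xB.
  by exists B; [rewrite leavesE BL | rewrite xB].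
split => //.
  by apply/forall_inP => A AL; apply/forall_inP => B BL; exact: lam.
apply/forall_inP => A AL; apply/eqP/setP => x; apply/idP/bigcupP.
  move=> xA; case: (cov A x AL xA) => B; rewrite leavesE => /andP[BL mB].
  by case/andP => xB sBA; exists B => //; rewrite BL mB sBA.
by case=> B /and3P[_ _ sBA] xB; exact: (subsetP sBA).
Qed.

Lemma disj_sub0 A B C : [disjoint A & B] -> C \subset A -> C \subset B -> C = set0.
Proof.
rewrite -setI_eq0 => /eqP AB sCA sCB; apply/eqP; rewrite -subset0 -AB.
by rewrite subsetI sCA sCB.
Qed.

Lemma leaves_sub L A : A \in leaves L -> A \in L.
Proof. by rewrite leavesE => /andP[]. Qed.
Lemma nonleaves_sub L A : A \in nonleaves L -> A \in L.
Proof. by rewrite nonleavesE => /andP[]. Qed.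

Lemma leaf_noproper L A B : A \in leaves L -> B \in L -> B \proper A -> False.
Proof.
rewrite leavesE => /andP[_ /minimalP m] BL; rewrite properEneq => /andP[neq sub].
by move: neq; rewrite (m B BL sub) eqxx.
Qed.

Lemma leaves_partition L : is_index_tree L -> set_partition (leaves L).
Proof.
case/itP => s0 sT lam cov; rewrite /set_partition /partition.
apply/and3P; split.
- rewrite eqEsubset subsetT /=; apply/subsetP => x _.
  case: (cov setT x sT (in_setT x)) => B BL /andP[xB _].
  by apply/bigcupP; exists B.
- apply/trivIsetP => A B AL BL neq.
  have AT := leaves_sub AL; have BT := leaves_sub BL.
  case/or3P: (lam A B AT BT) => // sub.
    by case: (leaf_noproper BL AT); rewrite properEneq neq sub.
  by case: (leaf_noproper AL BT); rewrite properEneq eq_sym neq sub.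
- by apply: contra s0 => /leaves_sub.
Qed.

Lemma leavesO T v : v \in nonleaves T -> leaves (T :\ v) = leaves T.
Proof.
move=> vNL; have /andP[vT nmv] : (v \in T) && ~~ minimal_in T v by rewrite -nonleavesE.
apply/setP => B; rewrite !leavesE !inE.
case BT: (B \in T); rewrite ?andbF ?andbT //.
have [->|neq] := eqVneq B v; first by rewrite (negbTE nmv).
apply/minimalP/minimalP => H C CT sCB; last first.
  by apply: H; move: CT; rewrite !inE => /andP[].
have [Cv|Cneq] := eqVneq C v; last by apply: H; rewrite // !inE Cneq.
subst C; case: (notminP nmv) => D DT pDv.
have DB : D = B.
  apply: H; first by rewrite !inE DT andbT; move: pDv; rewrite properEneq => /andP[].
  by apply: subset_trans sCB; exact: proper_sub.
subst D; by move: pDv; rewrite properE sCB andbF.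
Qed.

Lemma itO T v : is_index_tree T -> v \in nonleaves T -> v != setT ->
  is_index_tree (T :\ v).
Proof.
case/itP => s0 sT lam cov vNL vT; apply/itP; split.
- by rewrite !inE negb_and s0 orbT.
- by rewrite !inE eq_sym vT sT.
- by move=> A B; rewrite !inE => /andP[_ AT] /andP[_ BT]; exact: lam.
- by move=> A x; rewrite (leavesO vNL) !inE => /andP[_ AT]; exact: cov.
Qed.

Lemma nonleavesO T v : v \in nonleaves T -> nonleaves (T :\ v) = nonleaves T :\ v.
Proof.
move=> vNL; apply/setP => B; rewrite /nonleaves (leavesO vNL) !inE.
by case: (B == v); rewrite ?andbF.
Qed.

Definition Ev T v := [set B in T | ~~ (B \proper v)].

Lemma leavesEv T v : is_index_tree T -> v \in T -> forall B,
  (B \in leaves (Ev T v)) = (B == v) || ((B \in leaves T) && ~~ (B \proper v)).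
Proof.
case/itP => s0 sT lam cov vT B; rewrite !leavesE !inE.
have [->|neq] := eqVneq B v.
  rewrite vT properE subxx /= ; apply/minimalP => C.
  by rewrite inE => /andP[_ npC] sCv; apply/eqP; move: npC; rewrite properEneq sCv andbT negbK.
rewrite /=; case BT: (B \in T) => //=; case pBv: (B \proper v); rewrite ?andbF //=.
rewrite andbT; apply/minimalP/minimalP => H C CT sCB; last first.
  by apply: H; move: CT; rewrite inE => /andP[].
case pCv: (C \proper v); last by apply: H; rewrite // inE CT pCv.
case/or3P: (lam B v BT vT) => [sBv|svB|dis].
- by move: pBv; rewrite properEneq neq sBv.
- have: v = B by apply: H => //; rewrite inE vT properE subxx andbF.
  by move=> E; move: neq; rewrite E eqxx.
- have C0 : C = set0 by apply: (disj_sub0 dis) => //; exact: proper_sub.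
  by move: s0; rewrite -C0 CT.
Qed.

Lemma itEv T v : is_index_tree T -> v \in T -> is_index_tree (Ev T v).
Proof.
move=> itT vT; have LE := leavesEv itT vT.
case/itP: itT => s0 sT lam cov; apply/itP; split.
- by rewrite inE negb_and s0.
- by rewrite inE sT properE subsetT andbF.
- by move=> A B; rewrite !inE => /andP[AT _] /andP[BT _]; exact: lam.
move=> A x; rewrite inE => /andP[AT npA] xA.
case: (cov A x AT xA) => B BL /andP[xB sBA].
case pBv: (B \proper v).
  exists v; first by rewrite LE eqxx.
  have xv : x \in v by apply: (subsetP (proper_sub pBv)).
  rewrite xv /=; case/or3P: (lam A v AT vT) => [sAv|//|dis].
    by move: npA; rewrite properEneq sAv andbT negbK => /eqP ->.
  by move: (disjointFr dis xA); rewrite xv.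
by exists B; [rewrite LE BL pBv orbT | rewrite xB].
Qed.

Lemma tool1 T B v : B \in T -> B \proper v ->
  exists2 c, c \in children T v & B \subset c.
Proof.
move=> BT pBv.
pose P := fun C : {set 'I_n} => [&& C \in T, B \subset C & C \proper v].
have PB : P B by rewrite /P BT subxx pBv.
case: (arg_maxnP (fun C => #|C|) PB) => c /and3P[cT sBc pcv] Hmax.
exists c => //; rewrite inE cT pcv /=; apply/forall_inP => D DT; apply/implyP => pcD.
apply/negP => pDv.
have := Hmax D; rewrite /P DT pDv (subset_trans sBc (proper_sub pcD)) => /(_ isT).
by rewrite /geq /= leqNgt proper_card.
Qed.

Lemma excP T v : exceptional T v <->
  (v \in nonleaves T /\ forall B, B \in T -> B \proper v -> B \in leaves T).
Proof.
split.
  case/andP => vNL /subsetP chL; split => // B BT pBv.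
  case: (tool1 BT pBv) => c cch sBc.
  have /andP[_ /minimalP m] : (c \in T) && minimal_in T c by rewrite -leavesE; exact: chL.
  by rewrite (m B BT sBc); exact: chL.
case=> vNL H; apply/andP; split => //; apply/subsetP => c.
by rewrite inE => /andP[cT /andP[pcv _]]; exact: H.
Qed.

Lemma Econtr_Ev T v : exceptional T v -> Econtr T v = Ev T v.
Proof.
case/excP => vNL H; apply/setP => B; rewrite !inE.
case BT: (B \in T); rewrite ?andbF //= andbT.
case pBv: (B \proper v) => //=.
apply/negbF/forall_inP => C CT; apply/implyP => pBC; apply/negP => pCv.
by apply: (leaf_noproper (H C CT pCv) BT pBC).
Qed.

Lemma nonleavesEv T v : is_index_tree T -> exceptional T v ->
  nonleaves (Ev T v) = nonleaves T :\ v.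
Proof.
move=> itT exc; have /excP [vNL H] := exc.
have vT := nonleaves_sub vNL.
apply/setP => B; rewrite /nonleaves inE [in RHS]inE (leavesEv itT vT) !inE.
have [->|neq] := eqVneq B v => //=.
case BT: (B \in T); rewrite ?andbF ?andbT //.
case pBv: (B \proper v); rewrite /= ?andbT ?andbF //.
by move: (H B BT pBv); rewrite leavesE BT => /= ->.
Qed.

Definition mv (b : bool) T v :=
  if b then exceptional T v else (v \in nonleaves T) && (v != setT).
Definition res (b : bool) T v := if b then Econtr T v else Ocontr T v.

Lemma mv_nl b T v : mv b T v -> v \in nonleaves T.
Proof. by case: b => [/andP[]|/andP[]]. Qed.

Lemma res_props b T v : is_index_tree T -> mv b T v ->
  [/\ is_index_tree (res b T v), nonleaves (res b T v) = nonleaves T :\ v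
    & refines (leaves T) (leaves (res b T v))].
Proof.
move=> itT; case: b => /= mvT; last first.
  case/andP: mvT => vNL vnT; rewrite /Ocontr.
  split; [exact: itO | exact: nonleavesO |].
  rewrite (leavesO vNL); apply/forall_inP => a aL; apply/existsP; exists a.
  by rewrite aL subxx.
rewrite Econtr_Ev //; have vT := nonleaves_sub (mv_nl (b:=true) mvT).
split; [exact: itEv | exact: nonleavesEv |].
apply/forall_inP => a aL; apply/existsP.
case pav: (a \proper v).
  by exists v; rewrite (leavesEv itT vT) eqxx /= proper_sub.
by exists a; rewrite (leavesEv itT vT) aL pav orbT subxx.
Qed.

Lemma res_trees b k T v : T \in trees n k.+1 -> mv b T v -> res b T v \in trees n k.
Proof.
rewrite !inE => /andP[itT /eqP cT] mvT.
case: (res_props itT mvT) => itR nlR _; rewrite itR nlR /=.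
move: cT; rewrite (cardsD1 v) (mv_nl mvT) => /eqP; by rewrite add1n eqSS.
Qed.

End Trees.
From mathcomp Require Import zify.

Lemma bits_inj m (b c : 'I_m -> bool) :
  (\sum_(j < m) b j * 2 ^ j = \sum_(j < m) c j * 2 ^ j)%N -> forall j, b j = c j.
Proof.
have key k (d : 'I_k.+1 -> bool) : (\sum_(j < k.+1) d j * 2 ^ j =
   d ord0 + 2 * \sum_(j < k) d (lift ord0 j) * 2 ^ j)%N.
  rewrite big_ord_recl expn0 muln1 big_distrr; congr (_ + _)%N.
  by apply: eq_bigr => i _; rewrite lift0 expnS mulnCA.
elim: m b c => [|m IH] b c E j; first by case: j.
rewrite !key in E.
have h0 : b ord0 = c ord0 by move: E; case: (b ord0); case: (c ord0) => //= E; lia.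
rewrite h0 in E.
have hX : (\sum_(j < m) b (lift ord0 j) * 2 ^ j = \sum_(j < m) c (lift ord0 j) * 2 ^ j)%N by lia.
case: (unliftP ord0 j) => [j'|] ->; last by [].
exact: (IH _ _ hX).
Qed.

Lemma bcode_inj n (A B : {set 'I_n}) : bcode A = bcode B -> A = B.
Proof.
have E (C : {set 'I_n}) : bcode C = (\sum_(j < n) (j \in C) * 2 ^ j)%N.
  rewrite /bcode big_mkcond; apply: eq_bigr => i _; by case: (i \in C); rewrite ?mul1n.
rewrite !E => /bits_inj H; apply/setP => j; exact: H.
Qed.

Lemma blt_total n (A B : {set 'I_n}) : A != B -> blt B A = ~~ blt A B.
Proof.
move=> neq; rewrite /blt; have: bcode A != bcode B.
  by apply: contra neq => /eqP /bcode_inj ->.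
move=> nb; rewrite ltnNge leq_eqVlt negb_or; by rewrite nb.
Qed.

Local Open Scope ring_scope.

Section Comb.
Variable n : nat.
Implicit Types (L T : {set {set 'I_n}}) (A B C v : {set 'I_n}).

Definition eps (b : bool) : int := if b then -1 else 1.
Definition sgn' (S : {set {set 'I_n}}) v : int := (-1) ^+ #|[set B in S | blt B v]|.

Lemma sgnD1 (S : {set {set 'I_n}}) a b : a \in S -> sgn' (S :\ a) b = sgn' S b * (-1) ^+ blt a b.
Proof.
move=> aS; rewrite /sgn'.
have -> : [set B in S :\ a | blt B b] = [set B in S | blt B b] :\ a.
  by apply/setP => B; rewrite !inE andbA.
rewrite [in RHS](cardsD1 a) inE aS /= exprD.
by case: (blt a b); rewrite /= ?expr0 ?expr1 ?mul1r ?mulr1 // mulrN1 mulNr opprK mul1r.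
Qed.

Definition valid4 T T'' k1 v1 k2 v2 :=
  [&& mv k1 T v1, mv k2 (res k1 T v1) v2 & T'' == res k2 (res k1 T v1) v2].
Definition w4 T k1 v1 k2 v2 : int :=
  eps k1 * sgn T v1 * (eps k2 * sgn (res k1 T v1) v2).

Lemma sgn_res k T v1 v2 : is_index_tree T -> mv k T v1 ->
  sgn (res k T v1) v2 = sgn' (nonleaves T :\ v1) v2.
Proof. by move=> itT m; rewrite /sgn /sgn'; case: (res_props itT m) => _ -> _. Qed.

Lemma w4_special T k v1 v2 : is_index_tree T -> mv k T v1 -> mv (~~ k) T v1 ->
  w4 T (~~ k) v1 true v2 = - w4 T k v1 true v2.
Proof.
move=> itT m m'; rewrite /w4 (sgn_res _ itT m) (sgn_res _ itT m').
by case: k {m m'} => /=; ring.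
Qed.

Lemma w4_swap T k1 v1 k2 v2 : is_index_tree T -> mv k1 T v1 -> mv k2 T v2 ->
  v1 != v2 -> w4 T k2 v2 k1 v1 = - w4 T k1 v1 k2 v2.
Proof.
move=> itT m1 m2 neq; rewrite /w4 (sgn_res _ itT m1) (sgn_res _ itT m2).
rewrite !sgnD1 ?(mv_nl m1) ?(mv_nl m2) // (blt_total neq).
rewrite /sgn -/(sgn' (nonleaves T) v1) -/(sgn' (nonleaves T) v2).
by case: (blt v1 v2) => /=; ring.
Qed.

Lemma mvE_O T v1 v2 : is_index_tree T -> mv false T v1 ->
  mv true (res false T v1) v2 <-> v2 \in nonleaves T :\ v1 /\
    (forall B, B \in T -> B != v1 -> B \proper v2 -> B \in leaves T).
Proof.
move=> itT m; have vNL := mv_nl m; rewrite /= /Ocontr.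
split.
  move/excP => [h1 h2]; split; first by rewrite -(nonleavesO vNL).
  move=> B BT nB pB; rewrite -(leavesO vNL); apply: h2 => //; by rewrite !inE nB BT.
case=> h1 h2; apply/excP; split; first by rewrite (nonleavesO vNL).
move=> B; rewrite in_setD1 => /andP[nB BT] pB; rewrite (leavesO vNL); exact: h2.
Qed.

Lemma mvE_E T v1 v2 : is_index_tree T -> mv true T v1 ->
  mv true (res true T v1) v2 <-> v2 \in nonleaves T :\ v1 /\
    (forall B, B \in T -> ~~ (B \proper v1) -> B \proper v2 ->
       (B == v1) || ((B \in leaves T) && ~~ (B \proper v1))).
Proof.
move=> itT m; have vT := nonleaves_sub (mv_nl m); rewrite /= (Econtr_Ev m).
have NL := nonleavesEv itT m; have LE := leavesEv itT vT.
split.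
  move/excP => [h1 h2]; split; first by rewrite -NL.
  move=> B BT nB pB; rewrite -LE; apply: h2 => //; by rewrite inE BT nB.
case=> h1 h2; apply/excP; split; first by rewrite NL.
move=> B; rewrite inE => /andP[BT nB] pB; rewrite LE; exact: h2.
Qed.

Lemma mvO_res k T v1 v2 : is_index_tree T -> mv k T v1 ->
  mv false (res k T v1) v2 = (v2 \in nonleaves T :\ v1) && (v2 != setT).
Proof. by move=> itT m; case: (res_props itT m) => _ NL _; rewrite /= NL. Qed.

Lemma Ev_O_E T v1 v2 : v1 \proper v2 -> Ev (T :\ v1) v2 = Ev (Ev T v1) v2.
Proof.
move=> p12; apply/setP => B; rewrite !inE.
case pB2: (B \proper v2); rewrite /= ?andbF ?andbT //.
have nB1 : B != v1 by apply: contraFN pB2 => /eqP ->.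
have npB1 : ~~ (B \proper v1).
  by apply: contraFN pB2 => pB1; exact: proper_trans pB1 p12.
by rewrite nB1 npB1 andbT.
Qed.

Lemma OE_EE T T'' v1 v2 : is_index_tree T -> v1 \proper v2 ->
  valid4 T T'' false v1 true v2 -> valid4 T T'' true v1 true v2.
Proof.
move=> itT p12 /and3P[m1 m2 /eqP E].
have v1NL := mv_nl m1.
case: ((mvE_O v2 itT m1).1 m2) => h1 h2.
have m1' : mv true T v1.
  apply/excP; split => // B BT pB1; apply: h2 => //; last exact: proper_trans pB1 p12.
  by move: pB1; rewrite properEneq => /andP[].
have m2' : mv true (res true T v1) v2.
  apply/(mvE_E v2 itT m1'); split => // B BT nB1 pB2.
  have [->|neq] := eqVneq B v1; first by rewrite ?eqxx.
  by rewrite h2 // nB1 orbT.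
apply/and3P; split => //; rewrite E /= (Econtr_Ev m2) (Econtr_Ev m2') /= (Econtr_Ev m1').
by rewrite /Ocontr Ev_O_E.
Qed.

Lemma EE_OE T T'' v1 v2 : is_index_tree T -> v1 \proper v2 ->
  valid4 T T'' true v1 true v2 -> valid4 T T'' false v1 true v2.
Proof.
move=> itT p12 /and3P[m1 m2 /eqP E].
case/excP: (m1) => v1NL h1.
case: ((mvE_E v2 itT m1).1 m2) => h2 h3.
have m1' : mv false T v1.
  rewrite /= v1NL /=; apply: (contraTneq _ p12) => ->.
  by rewrite properE subsetT andbF.
have m2' : mv true (res false T v1) v2.
  apply/(mvE_O v2 itT m1'); split => // B BT nB pB2.
  case pB1: (B \proper v1); first exact: h1.
  case/orP: (h3 B BT (negbT pB1) pB2) => [/eqP eq|/andP[]//].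
  by move: nB; rewrite eq eqxx.
apply/and3P; split => //; rewrite E /= (Econtr_Ev m2) (Econtr_Ev m2') /= (Econtr_Ev m1).
by rewrite /Ocontr Ev_O_E.
Qed.

Lemma OO_OO T T'' v1 v2 : is_index_tree T ->
  valid4 T T'' false v1 false v2 -> valid4 T T'' false v2 false v1.
Proof.
move=> itT /and3P[m1 m2 /eqP E].
rewrite (mvO_res _ itT m1) in_setD1 in m2; case/andP: m2 => /andP[n21 v2NL] v2T.
have m2' : mv false T v2 by rewrite /= v2NL v2T.
apply/and3P; split => //.
  by rewrite (mvO_res _ itT m2') in_setD1 eq_sym n21 (mv_nl m1); case/andP: m1.
rewrite E /= /Ocontr; apply/eqP/setP => B; rewrite !inE.
by case: (B == v1); case: (B == v2).
Qed.

Lemma OE_EO T T'' v1 v2 : is_index_tree T -> ~~ (v1 \proper v2) ->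
  valid4 T T'' false v1 true v2 -> valid4 T T'' true v2 false v1.
Proof.
move=> itT np12 /and3P[m1 m2 /eqP E].
case: ((mvE_O v2 itT m1).1 m2) => h1 h2.
move: h1; rewrite in_setD1 => /andP[n21 v2NL].
have m2' : mv true T v2.
  apply/excP; split => // B BT pB2; apply: h2 => //.
  by apply: contraNneq np12 => <-.
apply/and3P; split => //.
  by rewrite (mvO_res _ itT m2') in_setD1 eq_sym n21 (mv_nl m1); case/andP: m1.
rewrite E /= (Econtr_Ev m2) (Econtr_Ev m2') /Ocontr.
by apply/eqP/setP => B; rewrite !inE andbA.
Qed.

Lemma EO_OE T T'' v1 v2 : is_index_tree T ->
  valid4 T T'' true v1 false v2 -> valid4 T T'' false v2 true v1.
Proof.
move=> itT /and3P[m1 m2 /eqP E].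
case/excP: (m1) => v1NL h1.
rewrite (mvO_res _ itT m1) in_setD1 in m2; case/andP: m2 => /andP[n21 v2NL] v2T.
have m2' : mv false T v2 by rewrite /= v2NL v2T.
have m1' : mv true (res false T v2) v1.
  apply/(mvE_O v1 itT m2'); split; first by rewrite in_setD1 eq_sym n21.
  by move=> B BT _ pB1; exact: h1.
apply/and3P; split => //.
rewrite E /= (Econtr_Ev m1) (Econtr_Ev m1') /Ocontr.
by apply/eqP/setP => B; rewrite !inE andbA.
Qed.

Lemma EE_EE T T'' v1 v2 : is_index_tree T -> ~~ (v1 \proper v2) ->
  valid4 T T'' true v1 true v2 -> valid4 T T'' true v2 true v1.
Proof.
move=> itT np12 /and3P[m1 m2 /eqP E].
case/excP: (m1) => v1NL h1.
case: ((mvE_E v2 itT m1).1 m2) => h2 h3.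
move: h2; rewrite in_setD1 => /andP[n21 v2NL].
have m2' : mv true T v2.
  apply/excP; split => // B BT pB2.
  case pB1: (B \proper v1); first exact: h1.
  case/orP: (h3 B BT (negbT pB1) pB2) => [/eqP eq|/andP[]//].
  by move: np12; rewrite -eq pB2.
have m1' : mv true (res true T v2) v1.
  apply/(mvE_E v1 itT m2'); split; first by rewrite in_setD1 eq_sym n21.
  by move=> B BT npB2 pB1; rewrite h1 // npB2 orbT.
apply/and3P; split => //.
rewrite E /= (Econtr_Ev m2) (Econtr_Ev m1') /= (Econtr_Ev m1) (Econtr_Ev m2').
apply/eqP/setP => B; rewrite !inE.
by case: (B \in T); case: (B \proper v1); case: (B \proper v2).
Qed.

Lemma bad_invalid T T'' v1 k2 v2 : v2 \proper v1 -> ~~ valid4 T T'' true v1 k2 v2.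
Proof.
move=> p21; apply/negP => /and3P[m1 m2 _].
have := mv_nl m2; rewrite /= (Econtr_Ev m1) => /nonleaves_sub.
by rewrite inE p21 andbF.
Qed.

Lemma valid_neq T T'' k1 v1 k2 v2 : is_index_tree T ->
  valid4 T T'' k1 v1 k2 v2 -> v1 != v2.
Proof.
move=> itT /and3P[m1 m2 _]; have := mv_nl m2.
case: (res_props itT m1) => _ -> _; rewrite in_setD1 eq_sym; by case/andP.
Qed.

Definition special (x : (bool * {set 'I_n}) * (bool * {set 'I_n})) :=
  x.2.1 && (x.1.2 \proper x.2.2).
Definition bad (x : (bool * {set 'I_n}) * (bool * {set 'I_n})) :=
  x.1.1 && (x.2.2 \proper x.1.2).
Definition invol (x : (bool * {set 'I_n}) * (bool * {set 'I_n})) :=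
  if special x then ((~~ x.1.1, x.1.2), x.2) else if bad x then x else (x.2, x.1).

Lemma invol_invol : involutive invol.
Proof.
case=> [[k1 v1] [k2 v2]]; rewrite /invol /special /bad /=.
case: k1; case: k2; case p12: (v1 \proper v2); case p21: (v2 \proper v1);
  by rewrite /= ?p12 ?p21.
Qed.

Definition Hx2 T T'' (p q : bool * {set 'I_n}) : int :=
  if valid4 T T'' p.1 p.2 q.1 q.2 then w4 T p.1 p.2 q.1 q.2 else 0.

Lemma valid_invol T T'' x : is_index_tree T ->
  valid4 T T'' x.1.1 x.1.2 x.2.1 x.2.2 ->
  valid4 T T'' (invol x).1.1 (invol x).1.2 (invol x).2.1 (invol x).2.2 /\
  w4 T (invol x).1.1 (invol x).1.2 (invol x).2.1 (invol x).2.2 =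
  - w4 T x.1.1 x.1.2 x.2.1 x.2.2.
Proof.
case: x => [[k1 v1] [k2 v2]] itT /= V; rewrite /invol /special /bad /=.
case: k2 V => [|] V /=.
  case p12: (v1 \proper v2) => /=.
    have V' : valid4 T T'' (~~ k1) v1 true v2.
      by case: k1 V => /= V; [exact: EE_OE | exact: OE_EE].
    split => //; apply: w4_special => //.
      by case/and3P: V.
    by case/and3P: V'.
  case p21: (k1 && (v2 \proper v1)).
    case: k1 V p21 => //= V p21; have := bad_invalid T T'' true p21; by rewrite V.
  have V' : valid4 T T'' true v2 k1 v1.
    case: k1 V p21 => /= V p21; last exact: OE_EO (negbT p12) V.
    by apply: EE_EE (negbT p12) V.
  split => //; apply: w4_swap => //; [by case/and3P: V | by case/and3P: V' | exact: valid_neq V].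
case p21: (k1 && (v2 \proper v1)).
  case: k1 V p21 => //= V p21; have := bad_invalid T T'' false p21; by rewrite V.
have V' : valid4 T T'' false v2 k1 v1.
  by case: k1 V p21 => /= V p21; [exact: EO_OE | exact: OO_OO].
split => //; apply: w4_swap => //; [by case/and3P: V | by case/and3P: V' | exact: valid_neq V].
Qed.

Lemma H_invol T T'' x : is_index_tree T ->
  Hx2 T T'' (invol x).1 (invol x).2 = - Hx2 T T'' x.1 x.2.
Proof.
move=> itT; rewrite /Hx2.
case V: (valid4 T T'' x.1.1 x.1.2 x.2.1 x.2.2).
  by case: (valid_invol itT V) => -> ->.
case V': (valid4 T T'' (invol x).1.1 (invol x).1.2 (invol x).2.1 (invol x).2.2); last by rewrite oppr0.
by case: (valid_invol itT V'); rewrite invol_invol V.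
Qed.

Lemma sum_invol (I : finType) (F : I -> int) (f : I -> I) :
  involutive f -> (forall x, F (f x) = - F x) -> \sum_x F x = 0.
Proof.
move=> fK FN.
have E : \sum_x F x = - \sum_x F x.
  rewrite {1}(reindex_inj (inv_inj fK)) /= -sumrN.
  by apply: eq_bigr => x _; rewrite FN.
move: E; set S := \sum_x F x => E; lia.
Qed.

Definition cc T T' : int := \sum_(p : bool * {set 'I_n})
  (if mv p.1 T p.2 && (T' == res p.1 T p.2) then eps p.1 * sgn T p.2 else 0).

Lemma inner k T T'' p q : T \in trees n k.+2 ->
  \sum_(T' in trees n k.+1)
    (if mv p.1 T p.2 && (T' == res p.1 T p.2) then eps p.1 * sgn T p.2 else 0) *
    (if mv q.1 T' q.2 && (T'' == res q.1 T' q.2) then eps q.1 * sgn T' q.2 else 0)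
  = Hx2 T T'' p q.
Proof.
move=> Ttr; rewrite /Hx2 /valid4.
case m: (mv p.1 T p.2) => /=; last by rewrite big1 // => T' _; rewrite mul0r.
have Rtr := res_trees Ttr m.
rewrite (bigD1 (res p.1 T p.2)) //= eqxx big1 ?addr0; last first.
  by move=> T' /andP[_ /negbTE ->]; rewrite mul0r.
case: (_ && _); last by rewrite mulr0.
by rewrite /w4 mulrA.
Qed.

Lemma comb k T T'' : T \in trees n k.+2 ->
  \sum_(T' in trees n k.+1) cc T T' * cc T' T'' = 0.
Proof.
move=> Ttr; have itT : is_index_tree T by move: Ttr; rewrite inE => /andP[].
rewrite /cc.
under eq_bigr => T' _ do rewrite big_distrlr /=.
rewrite exchange_big.
under eq_bigr => p _ do rewrite exchange_big /=.
under eq_bigr => p _ do under eq_bigr => q _ do rewrite (inner _ _ _ Ttr).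
rewrite pair_bigA /=.
apply: (sum_invol (f := invol)); first exact: invol_invol.
by move=> x; exact: H_invol.
Qed.

End Comb.

Lemma addMz (M N : zmodType) (h : M -> N) :
  (forall x y, h (x + y) = h x + h y) -> forall x z, h (x *~ z) = h x *~ z.
Proof.
move=> hD.
have h0 : h 0 = 0 by apply: (addrI (h 0)); rewrite -hD !addr0.
have hN x : h (- x) = - h x by apply/eqP; rewrite -addr_eq0 -hD addNr h0.
have hn x m : h (x *+ m) = h x *+ m.
  by elim: m => [|m IH]; rewrite ?mulr0n ?h0 // !mulrS hD IH.
move=> x [m|m]; first by rewrite -!pmulrn hn.
by rewrite !NegzE !mulrNz hN -!pmulrn hn.
Qed.

Section Cat.
Variable C : preadditive.

Lemma mcompMzl (a b c : C) (f : mor b c) (g : mor a b) z :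
  mcomp (f *~ z) g = mcomp f g *~ z.
Proof. by apply: (addMz (h := fun f => mcomp f g)) => x y; apply: comp_addl. Qed.

Lemma mcompMzr (a b c : C) (f : mor b c) (g : mor a b) z :
  mcomp f (g *~ z) = mcomp f g *~ z.
Proof. by apply: (addMz (h := fun g => mcomp f g)) => x y; apply: comp_addr. Qed.

Lemma dcompE n (F : {set {set 'I_n}} -> C) (phi : forall A B, mor (F A) (F B)) T T' :
  dcomp phi T T' = phi (leaves T) (leaves T') *~ cc T T'.
Proof.
rewrite /dcomp /cc -!mulrz_sumr -mulrzDr; congr (_ *~ _).
rewrite -(pair_bigA _ (fun b v => if mv b T v && (T' == res b T v) then eps b * sgn T v else 0)).
rewrite big_bool /= [RHS]addrC; congr (_ + _); rewrite big_mkcond; apply: eq_bigr => v _ /=.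
  by rewrite andbA mul1r.
case e: (exceptional T v); rewrite ?andbF //= ?mulN1r.
by case/andP: (e) => ->.
Qed.

End Cat.

Lemma cc_move n (A B : {set {set 'I_n}}) : cc A B != 0 ->
  exists b v, mv b A v /\ B = res b A v.
Proof.
rewrite /cc => nz.
case: (pickP (fun p : bool * {set 'I_n} => mv p.1 A p.2 && (B == res p.1 A p.2))) =>
  [p /andP[m /eqP e] | none]; first by exists p.1, p.2.
by move: nz; rewrite big1 ?eqxx // => p _; rewrite none.
Qed.

Unset Implicit Arguments.

Theorem lemma6p8 (C : preadditive) (n : nat)
    (F : {set {set 'I_n}} -> C) (phi : forall A B, mor (F A) (F B)) :
  strict_system phi ->
  forall (k : nat) (T T'' : {set {set 'I_n}}),
    T \in trees n k.+2 -> T'' \in trees n k ->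
    \sum_(T' in trees n k.+1) mcomp (dcomp phi T' T'') (dcomp phi T T') = 0.
Proof.
move=> [phiid phicomp] k T T'' Ttr T''tr.
have itT : is_index_tree T by move: Ttr; rewrite inE => /andP[].
under eq_bigr => T' _ do rewrite !dcompE mcompMzl mcompMzr -mulrzA.
rewrite (eq_bigr (fun T' => phi (leaves T) (leaves T'') *~ (cc T T' * cc T' T''))).
  by rewrite -mulrz_sumr comb // mulr0z.
move=> T' T'tr.
have itT' : is_index_tree T' by move: T'tr; rewrite inE => /andP[].
have [->|nz] := eqVneq (cc T T' * cc T' T'') 0; first by rewrite !mulr0z.
move: nz; rewrite mulf_eq0 negb_or => /andP[nz1 nz2].
case: (cc_move nz1) => b1 [v1 [m1 e1]].
case: (cc_move nz2) => b2 [v2 [m2 e2]].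
case: (res_props itT m1) => _ _; rewrite -e1 => r1.
case: (res_props itT' m2) => it2 _; rewrite -e2 => r2.
have p1 := leaves_partition itT; have p2 := leaves_partition itT'.
have p3 : set_partition (leaves T'') by rewrite e2; exact: leaves_partition.
by rewrite phicomp.
Qed.
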